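(* Maximal matching can be solved by a deterministic LOCAL algorithm in $O(\log n/\log\log n)$ rounds on $n$-node trees.
   Context: A maximal matching of a graph is a set of pairwise non-adjacent edges such that every edge of the graph shares an endpoint with some edge of the set. LOCAL model: nodes have unique IDs from $\{1,\dots,n^c\}$, know $n$, have unbounded computation, and communicate with neighbors in synchronous rounds with unbounded messages. *)

(* Defs.v *)
From mathcomp Require Import all_boot finmap.
Set Implicit Arguments. Unset Strict Implicit. Unset Printing Implicit Defensive.


Definition simple_graph (V : finType) (e : rel V) : Prop :=
  symmetric e /\ irreflexive e.

Definition is_tree (V : finType) (e : rel V) : Prop :=
  simple_graph e /\ (forall u w : V, connect e u w) /\
  (forall s : seq V, uniq s -> 2 < size s -> ~~ cycle e s).

Definition edges (V : finType) (e : rel V) : {set {set V}} :=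
  [set f : {set V} | [exists u, exists w, e u w && (f == [set u; w])]].

Definition is_matching (V : finType) (e : rel V) (M : {set {set V}}) : Prop :=
  M \subset edges e /\
  (forall f g, f \in M -> g \in M -> f != g -> [disjoint f & g]).

Definition is_maximal_matching (V : finType) (e : rel V) (M : {set {set V}}) : Prop :=
  is_matching e M /\
  (forall f, f \in edges e -> exists2 g, g \in M & ~~ [disjoint f & g]).

Fixpoint ball (V : finType) (e : rel V) (k : nat) (v : V) : {set V} :=
  if k is k'.+1 then
    let B := ball e k' v in B :|: [set w | [exists u in B, e u w]]
  else [set v].

(** The radius-T view of v in the LOCAL model: the ID of v together with the
    subgraph induced by the radius-T ball, labelled by the unique IDs.
    Since IDs are unique, this ID-labelled graph is represented canonically by
    finite sets of naturals. *)
Definition view := (nat * {fset nat} * {fset (nat * nat)})%type.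

Definition view_of (V : finType) (e : rel V) (idf : V -> nat) (T : nat) (v : V) : view :=
  let B := enum (ball e T v) in
  (idf v,
   [fset idf u | u in B]%fset,
   [fset (idf p.1, idf p.2) | p in [seq p <- [seq (x, y) | x <- B, y <- B] | e p.1 p.2]]%fset).

(** A deterministic T-round LOCAL algorithm (knowing n) is a map from
    (n, radius-T view) to an output. Output of node v: [Some id] = the ID of the
    neighbour v is matched to, [None] = unmatched. *)
Definition local_output (V : finType) (e : rel V) (idf : V -> nat) (n T : nat)
  (A : nat -> view -> option nat) (v : V) : option nat := A n (view_of e idf T v).

Definition output_matching (V : finType) (e : rel V) (idf : V -> nat)
  (out : V -> option nat) : {set {set V}} :=
  [set f : {set V} | [exists u, exists w,
     [&& e u w, out u == Some (idf w), out w == Some (idf u) & f == [set u; w]]]].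

Definition solves_maximal_matching (V : finType) (e : rel V) (idf : V -> nat)
  (out : V -> option nat) : Prop :=
  (forall v x, out v = Some x ->
     exists w, [/\ e v w, idf w = x & out w = Some (idf v)]) /\
  is_maximal_matching e (output_matching e idf out).

Definition valid_ids (n c : nat) (V : finType) (idf : V -> nat) : Prop :=
  injective idf /\ (forall v, 1 <= idf v <= n ^ c).

(* Main.v *)
Require Import Defs.
From mathcomp Require Import all_boot zify.
From Stdlib Require Import FunctionalExtensionality.
Set Implicit Arguments. Unset Strict Implicit. Unset Printing Implicit Defensive.


Section Forest.
Variables (V : finType) (e : rel V).
Hypothesis esym : symmetric e.
Hypothesis eirr : irreflexive e.
Hypothesis acyc : forall s : seq V, uniq s -> 2 < size s -> ~~ cycle e s.

Definition deg (S : {set V}) x := #|[set y in S | e x y]|.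

Lemma no_back x0 s y : path e x0 s -> uniq (x0 :: s) -> e x0 y -> y \in s ->
  y = head x0 s.
Proof.
move=> ps us exy ys.
have jlt : index y s < size s by rewrite index_mem.
case Ej: (index y s) => [|j].
  by case: s ps us ys jlt Ej => //= z s' _ _ _ _; case: ifP => // /eqP.
exfalso.
have H1 : uniq (x0 :: take j.+2 s) by have := take_uniq j.+3 us.
have H2 : 2 < size (x0 :: take j.+2 s) by rewrite /= size_takel // -Ej.
suff H3 : cycle e (x0 :: take j.+2 s) by move/negP: (acyc H1 H2).
rewrite /cycle rcons_path; apply/andP; split.
  by move: ps; rewrite -{1}(cat_take_drop j.+2 s) cat_path => /andP[].
rewrite (last_nth x0) /= size_takel -?Ej // /= nth_take // nth_index // esym.
 exact: exy.
Qed.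

Lemma long_path (S : {set V}) a : a \in S -> (forall x, x \in S -> 1 < deg S x) ->
  forall k, exists x0 s, [/\ path e x0 s, uniq (x0 :: s), all (mem S) (x0 :: s) & size s = k].
Proof.
move=> aS hdeg; elim=> [|k [x0 [s [ps us as_ sk]]]].
  by exists a, [::]; rewrite /= aS.
have x0S : x0 \in S by move: as_ => /= /andP[].
have /card_gt1P [b [c [bN cN bc]]] := hdeg _ x0S.
set y := if b == head x0 s then c else b.
have yN : y \in [set z in S | e x0 z] by rewrite /y; case: ifP.
have yh : y != head x0 s.
  by rewrite /y; case: ifP => [/eqP <-|/negbT //]; rewrite eq_sym.
move: yN; rewrite inE => /andP[yS ey].
exists y, (x0 :: s); split => //=.
- by rewrite esym ey.
  have /= -> := us; rewrite andbT inE negb_or; apply/andP; split.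
    by apply/negP => /eqP yx; move: ey; rewrite yx eirr.
  by apply/negP => ys; move/negP: yh; apply; apply/eqP; exact: (no_back ps us ey ys).
- by move: as_ => /= ->; rewrite yS.
- by rewrite sk.
Qed.

Lemma leaf (S : {set V}) : S != set0 -> exists2 x, x \in S & deg S x <= 1.
Proof.
case/set0Pn => a aS.
case: (boolP [forall x, (x \in S) ==> (1 < deg S x)]) => [/forallP H|].
  have [x0 [s [_ us as_ sk]]] := long_path aS (fun x xS => implyP (H x) xS) #|S|.
  have := uniq_leq_size (s2 := enum S) us.
  rewrite -cardE /= sk ltnn => /(_ _) H'; exfalso; apply: notF; apply: H' => z zs.
  by rewrite mem_enum; move/allP: as_; apply.
rewrite negb_forall => /existsP [x]; rewrite negb_imply => /andP[xS]; rewrite -leqNgt => ?.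
by exists x.
Qed.

Lemma sumdeg_m m (S : {set V}) : #|S| <= m -> \sum_(x in S) deg S x <= 2 * #|S|.
Proof.
elim: m S => [|m IH] S.
  by rewrite leqn0 cards_eq0 => /eqP ->; rewrite big_set0.
move=> Sm; case: (eqVneq S set0) => [->|Sn0]; first by rewrite big_set0.
have [x xS dx] := leaf Sn0.
have cS := cardsD1 x S; rewrite xS in cS.
rewrite (big_setD1 _ xS) /=.
have Hy : forall y, y \in S :\ x -> deg S y = (e y x : nat) + deg (S :\ x) y.
  move=> y yS'; rewrite /deg (cardsD1 x); congr (_ + _).
    by rewrite inE xS.
  suff -> : [set y0 in S | e y y0] :\ x = [set z in S :\ x | e y z] by [].
  by apply/setP => z; rewrite !inE; case: (z == x).
rewrite (eq_bigr _ Hy) big_split /=.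
have H1 : \sum_(y in S :\ x) (e y x : nat) <= 1.
  rewrite -big_mkcondr /= sum_nat_cond_const muln1.
  apply: leq_trans dx; apply: subset_leq_card; apply/subsetP => z.
  by rewrite !inE esym => /andP[/andP[_ ->] ->].
have Sm' : #|S :\ x| <= m by move: Sm; rewrite cS add1n.
have H2 := IH _ Sm'.
rewrite cS; move: dx H1 H2; lia.
Qed.

Lemma high_count (S : {set V}) t :
  #|[set x in S | t < deg S x]| * t.+1 <= 2 * #|S|.
Proof.
apply: leq_trans (sumdeg_m (leqnn _)).
rewrite -sum_nat_const.
rewrite [X in _ <= X](bigID (fun x => t < deg S x)) /=.
apply: leq_trans (leq_addr _ _).
have -> : \sum_(i in [set x in S | t < deg S x]) t.+1 = \sum_(i in S | t < deg S i) t.+1.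
  by apply: eq_bigl => z; rewrite inE.
by apply: leq_sum => i /andP[].
Qed.
End Forest.


Definition Ln n := trunc_log 2 n.
Definition LLn n := trunc_log 2 (Ln n).
Definition hn n := maxn 2 (LLn n)./2.
Definition tn n := 2 ^ hn n - 1.
Definition ln n := (Ln n).+1 %/ (hn n - 1) + 1.
Definition B1n c n := c * (Ln n).+1.
Definition B2n c n := (trunc_log 2 (2 * B1n c n)).+1.
Definition fn c n := B1n c n + B2n c n.
Definition Rn c n := ln n + 3 + (tn n * (2 * B2n c n)).*2.

Lemma poly_exp h : (h + 1) * (h + 1) <= 4 * 2 ^ h.
Proof.
elim: h => [//|h IH]; rewrite expnS.
case: (leqP h 1) => hh; first by case: h hh IH => [|[|]].
nia.
Qed.

Lemma B2_bound c n : 0 < c -> B2n c n <= LLn n + c + 3.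
Proof.
move=> c0; rewrite /B2n.
have hL : Ln n < 2 ^ (LLn n).+1 by apply: trunc_log_ltn.
have hc : c < 2 ^ c by apply: ltn_expl.
have H : 2 * B1n c n < 2 ^ (LLn n + c + 2).
  rewrite /B1n !expnD; have : (Ln n).+1 <= 2 ^ (LLn n).+1 by [].
  rewrite expnS; nia.
have p : 0 < 2 * B1n c n by rewrite /B1n; nia.
have := trunc_logP (leqnn 2) p => H2.
have := leq_ltn_trans H2 H; rewrite ltn_exp2l //; lia.
Qed.

Lemma bound c : 0 < c -> exists K N0, forall n, N0 <= n ->
  Rn c n * trunc_log 2 (trunc_log 2 n) <= K * trunc_log 2 n.
Proof.
move=> c0; exists (13 + 64 * (c + 4)), (2 ^ 16) => n nN.
rewrite -/(Ln n) -/(LLn n).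
set L := Ln n; set LL := LLn n.
have L16 : 16 <= L by apply: trunc_log_max.
have LL4 : 4 <= LL by apply: trunc_log_max.
have L0 : 0 < L by lia.
have LLL : 2 ^ LL <= L by apply: trunc_logP.
have LLlt : LL < 2 ^ LL by apply: ltn_expl.
set h := hn n.
have oh := odd_double_half LL; rewrite -muln2 in oh.
have ob : (odd LL : nat) <= 1 by case: (odd LL).
move: ob oh; set o := (odd LL : nat); set hh := LL./2 => ob oh.
have hE : h = hh by rewrite /h /hn -/LL; apply/maxn_idPr; lia.
have hL : hh * 2 <= LL by lia.
have hL' : LL <= (hh * 2).+1 by lia.
rewrite -hE in hL hL'.
have h2 : 2 <= h by lia.
have a2 : 2 ^ h * 2 ^ h <= L by rewrite -expnD; apply: leq_trans LLL; rewrite leq_exp2l //; lia.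
have ta : tn n < 2 ^ h by rewrite /tn -/h; have := expn_gt0 2 h; lia.
have B2b := B2_bound n c0; rewrite -/LL in B2b.
have pe := poly_exp h.
have lb : ln n * (h - 1) <= L + h.
  rewrite /ln -/L -/h mulnDl mul1n; have := leq_trunc_div L.+1 (h - 1); lia.
have hLb : h <= L by lia.
have T1 : ln n * LL <= 10 * L.
  apply: (@leq_trans (ln n * (5 * (h - 1)))); first by rewrite leq_mul2l; apply/orP; right; lia.
  rewrite mulnCA; move: lb; set X := ln n * (h - 1); lia.
set a := 2 ^ h in a2 ta pe *.
have E2 : (2 * h + c + 4) * (2 * h + 1) <= 16 * (c + 4) * a.
  apply: (@leq_trans (((c + 4) * (2 * (h + 1))) * (2 * (h + 1)))).
    by apply: leq_mul; nia.
  have -> : (c + 4) * (2 * (h + 1)) * (2 * (h + 1)) = 4 * (c + 4) * ((h + 1) * (h + 1)) by nia.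
  apply: (@leq_trans (4 * (c + 4) * (4 * a))); first by rewrite leq_mul2l pe orbT.
  by rewrite (_ : 4 * (c + 4) * (4 * a) = 16 * (c + 4) * a) //; nia.
have T2 : (tn n * (2 * B2n c n)).*2 * LL <= 64 * (c + 4) * L.
  rewrite -muln2.
  have E1 : tn n * (2 * B2n c n) * 2 * LL <= a * (2 * (2 * h + c + 4)) * 2 * (2 * h + 1).
    apply: leq_mul; last by lia.
    apply: leq_mul => //; apply: leq_mul; [lia|lia].
  apply: leq_trans E1 _.
  have -> : a * (2 * (2 * h + c + 4)) * 2 * (2 * h + 1) = 4 * a * ((2 * h + c + 4) * (2 * h + 1)) by nia.
  apply: leq_trans (leq_mul (leqnn _) E2) _.
  have -> : 4 * a * (16 * (c + 4) * a) = 64 * (c + 4) * (a * a) by nia.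
  by rewrite leq_mul2l a2 orbT.
move: T1 T2; set X1 := ln n * LL; set X2 := (tn n * (2 * B2n c n)).*2 * LL.
set Z := 64 * (c + 4) * L.
have E3 : Rn c n * LL = X1 + 3 * LL + X2 by rewrite /Rn mulnDl mulnDl.
have E4 : (13 + 64 * (c + 4)) * L = 13 * L + Z by rewrite mulnDl.
rewrite E3 E4.
have : LL <= L by lia.
lia.
Qed.

From mathcomp Require Import finmap.
Local Open Scope fset_scope.


Section Rounds.
Variable S : Type.
Variable init : nat -> S.
Variable F : nat -> nat -> S -> {fset nat} -> (nat -> option S) -> S.
Variables (X : choiceType) (idx : X -> nat) (nbr : X -> seq X).

Definition NI x : {fset nat} := [fset idx w | w in nbr x].
Definition nbf (st : X -> S) x k : option S :=
  omap st (ohead [seq w <- nbr x | idx w == k]).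
Fixpoint run r : X -> S :=
  if r is r'.+1 then (fun x => F r' (idx x) (run r' x) (NI x) (nbf (run r') x))
  else (fun x => init (idx x)).
End Rounds.



Lemma ohead_filterP' (T : eqType) (p : pred T) s x :
  ohead [seq y <- s | p y] = Some x -> (x \in s) && p x.
Proof.
elim: s => //= y s IH; case: ifP => [py [<-]|_ /IH]; first by rewrite inE eqxx py.
by rewrite inE => /andP[-> ->]; rewrite orbT.
Qed.

Lemma ohead_filterN (T : eqType) (p : pred T) s :
  ohead [seq y <- s | p y] = None -> ~~ has p s.
Proof. by elim: s => //= y s IH; case: ifP. Qed.

Lemma ball_mono (V : finType) (e : rel V) v k k' : k <= k' ->
  ball e k v \subset ball e k' v.
Proof.
move=> /subnK <-; elim: (k' - k) => //= m IH.
by apply: subset_trans IH _; rewrite subsetUl.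
Qed.

Lemma ball_nbr (V : finType) (e : rel V) v k u w :
  u \in ball e k v -> e u w -> w \in ball e k.+1 v.
Proof.
by move=> uB euw /=; rewrite in_setU; apply/orP; right; rewrite inE; apply/existsP; exists u; rewrite uB.
Qed.

Definition nbrG n (e : rel 'I_n) (u : 'I_n) : seq 'I_n := [seq w <- enum 'I_n | e u w].
Definition nbrH (EH : {fset (nat * nat)}) (k : nat) : seq nat :=
  [seq p.2 | p <- EH & p.1 == k].

Lemma locality S init F n (e : rel 'I_n) (idf : 'I_n -> nat) (EH : {fset (nat*nat)}) T v :
  injective idf ->
  (forall a b, ((a, b) \in EH) <-> exists x y, [/\ x \in ball e T v, y \in ball e T v,
        e x y, idf x = a & idf y = b]) ->
  forall r, r <= T -> forall u, u \in ball e (T - r) v ->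
    @run S init F _ idf (nbrG e) r u = @run S init F _ id (nbrH EH) r (idf u).
Proof.
move=> inj HE; elim=> [|r IH] rT u uB //=.
have uB1 : u \in ball e (T - r) v.
  by apply: (subsetP (ball_mono _ _ _)) uB; rewrite leq_sub2l.
have uBT1 : u \in ball e T.-1 v.
  by apply: (subsetP (ball_mono _ _ _)) uB; rewrite -subn1 leq_sub2l.
have Tpos : 0 < T by apply: leq_trans rT.
have nbB w : e u w -> w \in ball e T v.
  by move=> euw; rewrite -(prednK Tpos); apply: ball_nbr euw.
have nbB' w : e u w -> w \in ball e (T - r) v.
  move=> euw; have := ball_nbr uB euw; rewrite subnS prednK //.
  by rewrite subn_gt0.
have memH k : (k \in nbrH EH (idf u)) = has (fun w => idf w == k) (nbrG e u).
  apply/idP/idP.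
  - case/mapP=> p; rewrite mem_filter => /andP[/eqP p1 pE] ->.
    case: p p1 pE => a b /= -> /HE [x [y [xB yB exy /inj xu yb]]].
    by subst x; apply/hasP; exists y; [rewrite /nbrG mem_filter mem_enum exy|rewrite yb].
  - case/hasP=> w; rewrite /nbrG mem_filter mem_enum andbT => euw /eqP <-.
    apply/mapP; exists (idf u, idf w) => //; rewrite mem_filter /= eqxx /=.
    by apply/HE; exists u, w; split=> //; [exact: (subsetP (ball_mono e v (leq_pred T))) uBT1|exact: nbB].
rewrite (IH (ltnW rT) u uB1); congr F.
  apply/fsetP=> k; apply/imfsetP/imfsetP => /= [[w wN ->]|[k' kN ->]].
    by exists (idf w) => //; rewrite memH; apply/hasP; exists w.
  by move: kN; rewrite memH => /hasP [w ? /eqP <-]; exists w.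
apply: FunctionalExtensionality.functional_extensionality => k.
rewrite /nbf.
case E1: (ohead [seq w <- nbrG e u | idf w == k]) => [w|] /=.
  move: (ohead_filterP' E1) => /andP[wN /eqP wk].
  have kin : k \in nbrH EH (idf u) by rewrite memH; apply/hasP; exists w => //; apply/eqP.
  case E2: (ohead [seq w <- nbrH EH (idf u) | id w == k]) => [k'|].
    move: (ohead_filterP' E2) => /andP[_ /eqP ->] /=; rewrite -wk.
    by rewrite (IH (ltnW rT) w) //; apply: nbB'; move: wN; rewrite /nbrG mem_filter mem_enum andbT.
  by move/ohead_filterN: E2 => /hasP []; exists k.
case E2: (ohead [seq w <- nbrH EH (idf u) | id w == k]) => [k'|] //=.
move: (ohead_filterP' E2) => /andP[kN /eqP kk].
move/ohead_filterN: E1 => /hasP []; move: kN; rewrite kk memH => /hasP [w ? ?]; by exists w.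
Qed.


Record stt := St { lay : option nat; par : seq nat; col : nat -> nat; mate : option nat }.

Fixpoint bit i a := if i is i'.+1 then bit i' a./2 else odd a.
Fixpoint ldb f a b := if f is f'.+1 then (if odd a != odd b then 0 else (ldb f' a./2 b./2).+1) else 0.
Definition cv f a b := (2 * ldb f a b + bit (ldb f a b) a)%N.

Definition pj (s : stt) j : option nat :=
  if j < size (par s) then Some (nth 0 (par s) j) else None.

Definition alive (o : option stt) := if o is Some s then lay s == None else false.
Definition keylt a ia b ib := (a < b) || ((a == b) && (ia < ib)).
Definition higher x (sx : stt) k (o : option stt) :=
  if o is Some s then keylt (odflt 0 (lay sx)) x (odflt 0 (lay s)) k else false.
Definition proposer x j c (o : option stt) :=
  if o is Some s then (mate s == None) && (pj s j == Some x) && (col s j == c) else false.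

Section Alg.
Variables (t l fu : nat).

Definition Fl r (x : nat) s (NI : {fset nat}) (nb : nat -> option stt) :=
  if (lay s == None) && (#|` [fset k in NI | alive (nb k)] | <= t)
  then St (Some r) (par s) (col s) (mate s) else s.
Definition Fp x s (NI : {fset nat}) (nb : nat -> option stt) :=
  St (lay s) (enum_fset [fset k in NI | higher x s k (nb k)]) (col s) (mate s).
Definition pcol s (nb : nat -> option stt) j :=
  if pj s j is Some p then (if nb p is Some sp then Some (col sp j) else None) else None.
Definition Fc s (nb : nat -> option stt) :=
  St (lay s) (par s)
     (fun j => if pcol s nb j is Some b then cv fu (col s j) b else odd (col s j)) (mate s).
Definition FA q x s (NI : {fset nat}) (nb : nat -> option stt) :=
  if mate s is None then
    (if enum_fset [fset k in NI | proposer x (q %% t) (q %/ t) (nb k)] is k :: _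
     then St (lay s) (par s) (col s) (Some k) else s)
  else s.
Definition FB q x s (nb : nat -> option stt) :=
  if (mate s == None) && (col s (q %% t) == q %/ t) then
    (if pj s (q %% t) is Some p then
       (if nb p is Some sp then
          (if mate sp == Some x then St (lay s) (par s) (col s) (Some p) else s)
        else s)
     else s)
  else s.
Definition F r x s NI nb :=
  if r < l then Fl r x s NI nb else if r == l then Fp x s NI nb
  else if r < l + 3 then Fc s nb
  else if odd (r - (l + 3)) then FB (r - (l + 3))./2 x s nb
  else FA (r - (l + 3))./2 x s NI nb.
Definition init (x : nat) := St None [::] (fun _ => x) None.
End Alg.

Section Inst.
Variables (n : nat) (e : rel 'I_n) (idf : 'I_n -> nat).
Hypothesis inj : injective idf.

Definition NIG u := NI idf (nbrG e) u.
Definition nbG (st : 'I_n -> stt) u := nbf idf (nbrG e) st u.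

Lemma NIGP u k : reflect (exists2 w, e u w & idf w = k) (k \in NIG u).
Proof.
apply: (iffP (imfsetP _ _ _ _)) => /= [[w]|[w euw <-]].
  by rewrite /nbrG mem_filter mem_enum andbT => euw ->; exists w.
by exists w => //; rewrite /nbrG mem_filter mem_enum andbT.
Qed.

Lemma nbG_nbr st u w : e u w -> nbG st u (idf w) = Some (st w).
Proof.
move=> euw; rewrite /nbG /nbf.
case E: (ohead _) => [x|] /=.
  by move/ohead_filterP': E => /andP[_ /eqP /inj ->].
move/ohead_filterN: E => /hasP []; exists w; rewrite ?eqxx //.
by rewrite /nbrG mem_filter mem_enum andbT.
Qed.

Lemma nbG_some st u k s : nbG st u k = Some s -> exists w, [/\ e u w, idf w = k & s = st w].
Proof.
rewrite /nbG /nbf; case E: (ohead _) => [x|] //= [<-].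
move/ohead_filterP': E => /andP[]; rewrite /nbrG mem_filter mem_enum andbT => ? /eqP ?.
by exists x.
Qed.

Lemma card_NIG u (P : pred nat) (st : 'I_n -> stt) :
  #|` [fset k in NIG u | P k] | = #|[set w | e u w & P (idf w)]|.
Proof.
have -> : [fset k in NIG u | P k] = [fset idf w | w in [set w | e u w & P (idf w)]].
  apply/fsetP => k; rewrite !inE; apply/andP/imfsetP => /= [[/NIGP [w euw <-] Pk]|[w]].
    by exists w => //; rewrite inE euw.
  by rewrite inE => /andP[euw Pw] ->; split=> //; apply/NIGP; exists w.
by rewrite card_imfset //= -cardE.
Qed.
End Inst.

Close Scope fset_scope.


Lemma ldbP f k a b : k <= f -> a < 2 ^ k -> b < 2 ^ k -> a != b ->
  ldb f a b < k /\ bit (ldb f a b) a != bit (ldb f a b) b.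
Proof.
elim: f k a b => [|f IH] k a b.
  by rewrite leqn0 => /eqP -> /=; rewrite !ltnS !leqn0 => /eqP -> /eqP ->.
case: k => [|k] kf.
  by rewrite !expn0 !ltnS !leqn0 => /eqP -> /eqP ->.
move=> ak bk ab /=; case: ifP => [od|/negbFE/eqP od]; first by split.
have ak' : a./2 < 2 ^ k by rewrite ltn_half_double -muln2 -expnSr.
have bk' : b./2 < 2 ^ k by rewrite ltn_half_double -muln2 -expnSr.
have ab' : a./2 != b./2.
  apply: contra ab => /eqP E; apply/eqP.
  by rewrite -(odd_double_half a) -(odd_double_half b) od E.
by have [] := IH k _ _ kf ak' bk' ab'.
Qed.

Lemma cv_lt f k a b : k <= f -> a < 2 ^ k -> b < 2 ^ k -> a != b -> cv f a b < 2 * k.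
Proof.
move=> kf ak bk ab; have [H _] := ldbP kf ak bk ab.
rewrite /cv; case: (bit _ _) => /=; lia.
Qed.

Lemma dbl_inj i j (x y : bool) : 2 * i + x = 2 * j + y -> i = j /\ x = y.
Proof.
move=> E; have Ex : x = y.
  have := congr1 odd E; rewrite !oddD.
  by clear E; case: x; case: y; case: (odd i); case: (odd j).
split=> //; rewrite Ex in E; lia.
Qed.

Lemma cv_neq f k a b i : k <= f -> a < 2 ^ k -> b < 2 ^ k -> a != b ->
  cv f a b != 2 * i + bit i b.
Proof.
move=> kf ak bk ab; have [_ H] := ldbP kf ak bk ab.
by apply/eqP => /dbl_inj [Ei Eb]; move: H; rewrite Eb Ei eqxx.
Qed.


Section Correct.
Variables (t l fu : nat).

Lemma F_lay r x s NI nb : r < l -> F t l fu r x s NI nb = Fl t r x s NI nb.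
Proof. by rewrite /F => ->. Qed.
Lemma F_par x s NI nb : F t l fu l x s NI nb = Fp x s NI nb.
Proof. by rewrite /F ltnn eqxx. Qed.
Lemma F_col r x s NI nb : l < r < l + 3 -> F t l fu r x s NI nb = Fc fu s nb.
Proof.
case/andP => h1 h2; rewrite /F h2 ifF ?ifF //; [apply/eqP; lia| apply/negbTE; rewrite -leqNgt; lia].
Qed.
Lemma F_A q x s NI nb : F t l fu (l + 3 + q.*2) x s NI nb = FA t q x s NI nb.
Proof.
rewrite /F ifF; last by apply/negbTE; rewrite -leqNgt; lia.
rewrite ifF; last by apply/eqP; lia.
rewrite ifF; last by apply/negbTE; rewrite -leqNgt; lia.
by rewrite addKn odd_double doubleK.
Qed.
Lemma F_B q x s NI nb : F t l fu (l + 3 + q.*2).+1 x s NI nb = FB t q x s nb.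
Proof.
rewrite /F ifF; last by apply/negbTE; rewrite -leqNgt; lia.
rewrite ifF; last by apply/eqP; lia.
rewrite ifF; last by apply/negbTE; rewrite -leqNgt; lia.
by rewrite -addnS addKn /= odd_double /= uphalf_double.
Qed.
End Correct.


Section Main.
Variables (n : nat) (e : rel 'I_n) (idf : 'I_n -> nat).
Hypothesis esym : symmetric e.
Hypothesis eirr : irreflexive e.
Hypothesis acyc : forall s : seq 'I_n, uniq s -> 2 < size s -> ~~ cycle e s.
Hypothesis inj : injective idf.
Variables (t l fu h : nat).
Hypothesis th : t.+1 = 2 ^ h.
Hypothesis h2 : 2 <= h.
Hypothesis nl : n < 2 ^ ((h - 1) * l).

Definition st r := run init (F t l fu) idf (nbrG e) r.

Lemma stS r u : st r.+1 u = F t l fu r (idf u) (st r u) (NIG e idf u) (nbG e idf (st r) u).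
Proof. by []. Qed.

Lemma late_cases r : l + 3 <= r -> exists q, (r = l + 3 + q.*2) \/ (r = (l+3+q.*2).+1).
Proof.
move=> r3; exists (r - (l + 3))./2; case: (boolP (odd (r - (l+3)))) => o; [right|left].
  rewrite -[in LHS](subnKC r3) -[r - _](odd_double_half) o; lia.
rewrite -[in LHS](subnKC r3) -[r - _](odd_double_half) (negbTE o); lia.
Qed.

Lemma late_fields r u : l + 3 <= r ->
  [/\ lay (st r.+1 u) = lay (st r u), par (st r.+1 u) = par (st r u)
    & col (st r.+1 u) = col (st r u)].
Proof.
move=> r3; rewrite stS; case: (late_cases r3) => q [->|->]; [rewrite F_A|rewrite F_B].
  rewrite /FA; case: (mate _) => // ; case: (enum_fset _) => //.
rewrite /FB; case: ifP => // _; case: (pj _ _) => // p; case: (nbG _ _ _ _ _) => // sp.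
by case: ifP.
Qed.

Lemma mate_early r u : r < l + 3 -> mate (st r.+1 u) = mate (st r u).
Proof.
move=> r3; rewrite stS; case: (ltngtP r l) => [rl|lr|->]; last by rewrite F_par.
  by rewrite F_lay //= /Fl; case: ifP.
by rewrite F_col ?lr.
Qed.

Lemma col_early r u : r <= l -> col (st r.+1 u) = col (st r u).
Proof.
move=> rl; rewrite stS; case: (ltngtP r l) rl => // [rl|->] _; last by rewrite F_par.
by rewrite F_lay //= /Fl; case: ifP.
Qed.

Lemma par_nl r u : r != l -> l + 3 <= r \/ r < l + 3 -> par (st r.+1 u) = par (st r u).
Proof.
move=> rnl _; case: (leqP (l + 3) r) => r3; first by case: (late_fields u r3).
rewrite stS; case: (ltngtP r l) rnl => // [rl|lr] _.
  by rewrite F_lay //= /Fl; case: ifP.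
by rewrite F_col ?lr.
Qed.

Lemma lay_late r u : l <= r -> lay (st r.+1 u) = lay (st r u).
Proof.
move=> lr; case: (leqP (l + 3) r) => r3; first by case: (late_fields u r3).
rewrite stS; case: (ltngtP r l) lr => // [lr|->] _; last by rewrite F_par.
by rewrite F_col ?lr.
Qed.

Lemma mate_late r u k : mate (st r u) = Some k -> mate (st r.+1 u) = Some k.
Proof.
move=> mk; case: (ltnP r (l + 3)) => r3; first by rewrite mate_early.
rewrite stS; case: (late_cases r3) => q [Eq|Eq]; rewrite Eq; [rewrite F_A|rewrite F_B]; rewrite -Eq.
  by rewrite /FA mk.
by rewrite /FB mk.
Qed.

Lemma mate_mono r r' u k : r <= r' -> mate (st r u) = Some k -> mate (st r' u) = Some k.
Proof. by move/subnK <-; elim: (r' - r) => //= m IH /IH; apply: mate_late. Qed.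

Definition aliveS r := [set w | lay (st r w) == None].

Lemma cnt_alive r u :
  (#|` [fset k in NIG e idf u | alive (nbG e idf (st r) u k)] |)%fset = deg e (aliveS r) u.
Proof.
rewrite (@card_NIG n e idf inj u _ (st r)) /deg; apply: eq_card => w; rewrite !inE.
case euw : (e u w); last by rewrite andbF.
by rewrite nbG_nbr //= andbT.
Qed.

Lemma lay_step r u : r < l -> lay (st r.+1 u) =
  if (lay (st r u) == None) && (deg e (aliveS r) u <= t) then Some r else lay (st r u).
Proof. by move=> rl; rewrite stS F_lay // /Fl -cnt_alive; case: ifP. Qed.

Lemma lay_keep r u i : lay (st r u) = Some i -> lay (st r.+1 u) = Some i.
Proof.
move=> H; case: (ltnP r l) => rl; last by rewrite lay_late.
by rewrite lay_step // H.
Qed.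

Lemma lay_keep_mono r r' u i : r <= r' -> lay (st r u) = Some i -> lay (st r' u) = Some i.
Proof. by move/subnK <-; elim: (r' - r) => //= m IH /IH; apply: lay_keep. Qed.

Lemma lay_Some r u i : lay (st r u) = Some i ->
  [/\ i < r, i < l, lay (st i u) = None & lay (st i.+1 u) = Some i].
Proof.
elim: r => [//|r IH].
case: (ltnP r l) => rl; last first.
  by rewrite lay_late // => /IH [*]; split=> //; apply: ltnW.
rewrite lay_step //; case: ifP => [/andP[/eqP Hn Hd] [<-]|_ /IH [*]]; last by split=> //; apply: ltnW.
by split=> //; rewrite lay_step // Hn eqxx Hd.
Qed.

Lemma alive_next r : r < l ->
  aliveS r.+1 = [set x in aliveS r | t < deg e (aliveS r) x].
Proof.
move=> rl; apply/setP => x; rewrite !inE lay_step //.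
case: (lay (st r x)) => [i|] //=.
by case: ifP => //; rewrite ltnNge => ->.
Qed.

Lemma alive_count r : r <= l -> #|aliveS r| * 2 ^ ((h - 1) * r) <= n.
Proof.
elim: r => [_|r IH rl].
  by rewrite muln0 expn0 muln1; apply: leq_trans (max_card _) _; rewrite card_ord.
apply: leq_trans (IH (ltnW rl)).
have H := high_count esym eirr acyc (aliveS r) t.
rewrite -alive_next // th in H.
have E : 2 ^ h = 2 * 2 ^ (h - 1) by rewrite -expnS; congr (_ ^ _); lia.
rewrite E mulnA [_ * 2]mulnC -mulnA leq_pmul2l // in H.
rewrite mulnS expnD mulnA; apply: leq_mul => //.
Qed.

Lemma all_layered u : exists i, lay (st l u) = Some i.
Proof.
case E: (lay (st l u)) => [i|]; first by exists i.
have Hc := alive_count (leqnn l).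
have uA : u \in aliveS l by rewrite inE E.
have p : 0 < #|aliveS l| by apply/card_gt0P; exists u.
have H1 : 2 ^ ((h - 1) * l) <= #|aliveS l| * 2 ^ ((h - 1) * l) by rewrite leq_pmull.
by have := leq_trans H1 Hc; rewrite leqNgt nl.
Qed.

Definition Lf u := odflt 0 (lay (st l u)).

Lemma LfP u : lay (st l u) = Some (Lf u).
Proof. by rewrite /Lf; case: (all_layered u) => i ->. Qed.

Lemma Lf_lt u : Lf u < l.
Proof. by case: (lay_Some (LfP u)). Qed.

Lemma Lf_alive w i : i <= Lf w -> lay (st i w) = None.
Proof.
move=> iL; case E: (lay (st i w)) => [j|] //.
have [ji _ _ _] := lay_Some E.
have := lay_keep_mono (leq_trans iL (ltnW (Lf_lt w))) E.
by rewrite LfP => -[jL]; move: ji; rewrite -jL ltnNge iL.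
Qed.

Lemma deg_bound u : #|[set w | e u w & Lf u <= Lf w]| <= t.
Proof.
have [_ il Hi Hi1] := lay_Some (LfP u).
move: Hi1; rewrite lay_step // Hi eqxx /=; case: ifP => // dt _.
apply: leq_trans dt; apply: subset_leq_card; apply/subsetP => w.
by rewrite !inE => /andP[euw /Lf_alive ->]; rewrite euw.
Qed.

Definition isPar u w := e u w && keylt (Lf u) (idf u) (Lf w) (idf w).

Definition PS u := enum_fset [fset k in NIG e idf u | higher (idf u) (st l u) k (nbG e idf (st l) u k)]%fset.

Lemma par_l1 u : par (st l.+1 u) = PS u.
Proof. by rewrite stS F_par. Qed.

Lemma par_late r u : l < r -> par (st r u) = PS u.
Proof.
elim: r => // r IH; rewrite ltnS leq_eqVlt => /orP[/eqP <-|lr]; first exact: par_l1.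
rewrite par_nl ?IH //; last by case: (ltnP r (l+3)); [right|left].
by rewrite neq_ltn lr orbT.
Qed.

Lemma higher_nb u w : e u w ->
  higher (idf u) (st l u) (idf w) (nbG e idf (st l) u (idf w)) = keylt (Lf u) (idf u) (Lf w) (idf w).
Proof. by move=> euw; rewrite nbG_nbr //= /Lf. Qed.

Lemma mem_PS u k : reflect (exists2 w, isPar u w & idf w = k) (k \in PS u).
Proof.
rewrite /PS; apply: (iffP idP).
  rewrite (_ : (k \in enum_fset _) = (k \in [fset k0 in NIG e idf u | higher (idf u) (st l u) k0 (nbG e idf (st l) u k0)]%fset)) //.
  rewrite !inE => /andP[/NIGP [w euw <-]]; rewrite higher_nb // => kl.
  by exists w => //; rewrite /isPar euw.
case=> w /andP[euw kl] <-.
rewrite (_ : (idf w \in enum_fset _) = (idf w \in [fset k0 in NIG e idf u | higher (idf u) (st l u) k0 (nbG e idf (st l) u k0)]%fset)) //.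
rewrite !inE higher_nb // kl andbT; apply/NIGP; by exists w.
Qed.

Lemma size_PS u : size (PS u) <= t.
Proof.
rewrite /PS (@card_NIG n e idf inj u _ (st l)).
apply: leq_trans (deg_bound u); apply: subset_leq_card; apply/subsetP => w.
rewrite !inE => /andP[euw]; rewrite nbG_nbr //= euw /= /keylt /Lf => /orP[/ltnW //|/andP[/eqP -> _]] //.
Qed.

Definition PJ u j := pj (st l.+1 u) j.

Lemma PJ_late r u j : l < r -> pj (st r u) j = PJ u j.
Proof. by move=> lr; rewrite /PJ /pj par_late // par_l1. Qed.

Lemma PJ_par u j k : PJ u j = Some k -> j < t /\ exists2 w, isPar u w & idf w = k.
Proof.
rewrite /PJ /pj par_l1; case: ifP => // jl [<-]; split.
  exact: leq_trans jl (size_PS u).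
by apply/mem_PS; apply: mem_nth.
Qed.

Lemma par_PJ u w : isPar u w -> exists2 j, j < t & PJ u j = Some (idf w).
Proof.
move=> pw; have wm : idf w \in PS u by apply/mem_PS; exists w.
exists (index (idf w) (PS u)).
  by apply: leq_trans (size_PS u); rewrite index_mem.
by rewrite /PJ /pj par_l1 index_mem wm nth_index.
Qed.

Lemma orient u w : e u w -> isPar u w \/ isPar w u.
Proof.
move=> euw; rewrite /isPar euw (esym w u) euw /= /keylt.
have : idf u != idf w by apply/eqP => /inj uw; move: euw; rewrite uw eirr.
case: (ltngtP (Lf u) (Lf w)) => _ /=; try by [left|right].
by case: (ltngtP (idf u) (idf w)) => //= _ _; [left|right].
Qed.

Lemma col_early_all r u : r <= l.+1 -> col (st r u) = fun _ => idf u.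
Proof.
elim: r => [_|r IH rl]; first by [].
have rl' : r <= l by rewrite -ltnS.
rewrite (col_early u rl'); exact: (IH (ltnW rl)).
Qed.

Lemma colS r u j : l < r < l + 3 ->
  col (st r.+1 u) j = if PJ u j is Some p then
     (if nbG e idf (st r) u p is Some sp then cv fu (col (st r u) j) (col sp j) else odd (col (st r u) j))
   else odd (col (st r u) j).
Proof.
move=> rr; rewrite stS F_col //= /pcol PJ_late; last by case/andP: rr.
by case: (PJ u j) => // p; case: (nbG _ _ _ _ _).
Qed.

Lemma colS_par r u w j : l < r < l + 3 -> isPar u w -> PJ u j = Some (idf w) ->
  col (st r.+1 u) j = cv fu (col (st r u) j) (col (st r w) j).
Proof.
move=> rr /andP[euw _] pj; by rewrite colS // pj nbG_nbr.
Qed.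

Lemma colS_form r w j : l < r < l + 3 ->
  exists i, col (st r.+1 w) j = 2 * i + bit i (col (st r w) j).
Proof.
move=> rr; rewrite colS //.
case: (PJ w j) => [p|]; last by exists 0; rewrite muln0.
case: (nbG _ _ _ _ _) => [sp|]; last by exists 0; rewrite muln0.
by exists (ldb fu (col (st r w) j) (col sp j)).
Qed.

Definition proper r := forall u w j, isPar u w -> PJ u j = Some (idf w) ->
  col (st r u) j != col (st r w) j.
Definition bnd r k := forall u j, col (st r u) j < 2 ^ k.

Lemma proper_step r k : l < r < l + 3 -> k <= fu -> proper r -> bnd r k -> proper r.+1.
Proof.
move=> rr kf pr bd u w j pw pj.
rewrite (colS_par rr pw pj); have [i ->] := colS_form w j rr.
by apply: (@cv_neq fu k); [exact: kf|exact: bd|exact: bd|exact: pr].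
Qed.

Lemma bnd_step r k : l < r < l + 3 -> k <= fu -> 0 < k -> proper r -> bnd r k ->
  forall u j, col (st r.+1 u) j < 2 * k.
Proof.
move=> rr kf k0 pr bd u j.
case E: (PJ u j) => [p|]; last by rewrite colS // E; case: (odd _) => /=; lia.
have [_ [w pw wp]] := PJ_par E; rewrite -wp in E.
by rewrite (colS_par rr pw E); apply: cv_lt; rewrite ?bd ?pr.
Qed.

Variables (B1 B2 : nat).
Hypothesis hid : forall u, idf u < 2 ^ B1.
Hypothesis B1f : B1 <= fu.
Hypothesis B2f : B2 <= fu.
Hypothesis B12 : 2 * B1 <= 2 ^ B2.
Hypothesis B1p : 0 < B1.

Lemma B2p : 0 < B2.
Proof. by case: B2 B12 => //; rewrite expn0; lia. Qed.

Lemma proper1 : proper l.+1.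
Proof.
move=> u w j /andP[euw _] _; rewrite !col_early_all //.
by apply/eqP => /inj uw; move: euw; rewrite uw eirr.
Qed.

Lemma bnd1 : bnd l.+1 B1.
Proof. by move=> u j; rewrite col_early_all. Qed.

Lemma proper2 : proper l.+2.
Proof. apply: (@proper_step _ B1) => //; [lia|exact: proper1|exact: bnd1]. Qed.

Lemma bnd2 : bnd l.+2 B2.
Proof.
move=> u j; apply: leq_trans B12.
apply: (@bnd_step l.+1 B1) => //; [lia|exact: proper1|exact: bnd1].
Qed.

Lemma proper3 : proper (l + 3).
Proof. rewrite addn3; apply: (@proper_step _ B2) => //; [lia|exact: proper2|exact: bnd2]. Qed.

Lemma bnd3 u j : col (st (l + 3) u) j < 2 * B2.
Proof. rewrite addn3; apply: (@bnd_step l.+2 B2) => //; [lia|exact: B2p|exact: proper2|exact: bnd2]. Qed.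

Definition COL u j := col (st (l + 3) u) j.

Lemma COL_late r u : l + 3 <= r -> col (st r u) = col (st (l + 3) u).
Proof.
move/subnK <-; elim: (r - (l + 3)) => // m IH.
by rewrite addSn; case: (late_fields u (leq_addl m (l + 3))) => _ _ ->.
Qed.

Definition r0 q := l + 3 + q.*2.
Definition Pr q u := [fset k in NIG e idf u |
   proposer (idf u) (q %% t) (q %/ t) (nbG e idf (st (r0 q)) u k)]%fset.

Lemma mateA q u : mate (st (r0 q).+1 u) =
  if mate (st (r0 q) u) is Some k then Some k
  else (if enum_fset (Pr q u) is k :: _ then Some k else None).
Proof.
rewrite stS /r0 F_A /FA; case E: (mate (st (l + 3 + q.*2) u)) => [k|] /=; first by rewrite E.
by rewrite /Pr /r0; destruct (enum_fset _).
Qed.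

Lemma PrP q u k : k \in Pr q u -> exists w, [/\ e u w, idf w = k,
  mate (st (r0 q) w) = None, PJ w (q %% t) = Some (idf u) & COL w (q %% t) = q %/ t].
Proof.
rewrite /Pr !inE => /andP[/NIGP [w euw <-]]; rewrite nbG_nbr //=.
rewrite PJ_late /COL ?COL_late ?/r0; [|lia|lia].
by case/andP => /andP[/eqP m /eqP p] /eqP c; exists w.
Qed.

Lemma PrI q u w : e u w -> mate (st (r0 q) w) = None -> PJ w (q %% t) = Some (idf u) ->
  COL w (q %% t) = q %/ t -> idf w \in Pr q u.
Proof.
move=> euw m p c; rewrite /Pr !inE; apply/andP; split; first by apply/NIGP; exists w.
rewrite nbG_nbr //= PJ_late ?COL_late ?/r0; [|lia|lia].
by rewrite m p -/(COL w (q %% t)) c !eqxx.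
Qed.

Lemma mateB q u : mate (st (r0 q).+2 u) =
  if mate (st (r0 q).+1 u) is Some k then Some k
  else if COL u (q %% t) == q %/ t then
    (if PJ u (q %% t) is Some p then
       (if nbG e idf (st (r0 q).+1) u p is Some sp then
          (if mate sp == Some (idf u) then Some p else None) else None) else None)
  else None.
Proof.
rewrite stS /r0 F_B /FB COL_late ?PJ_late; [|lia|lia].
case E: (mate (st (l + 3 + q.*2).+1 u)) => [k|] /=; first by rewrite E.
rewrite -/(COL u (q %% t)); case: ifP => _; last by rewrite E.
case: (PJ u (q %% t)) => [p|]; last by rewrite E.
case: (nbG e idf (st (l + 3 + q.*2).+1) u p) => [sp|]; last by rewrite E.
by case: ifP => _; rewrite ?E.
Qed.

Definition Inv r := forall u k, mate (st r u) = Some k ->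
  exists w, [/\ e u w, idf w = k & mate (st r w) = Some (idf u)].

Lemma PJ_isPar u j w : PJ u j = Some (idf w) -> isPar u w.
Proof. by case/PJ_par => _ [w' pw' /inj <-]. Qed.

Lemma COL_proper u w j : PJ u j = Some (idf w) -> COL u j != COL w j.
Proof. by move=> p; exact: (proper3 (PJ_isPar p) p). Qed.

Lemma enum_head (A : {fset nat}) k s : enum_fset A = k :: s -> k \in A.
Proof. by move=> E; have : k \in (enum_fset A : seq nat) by rewrite E; exact: mem_head. Qed.

Lemma noA q u k : mate (st (r0 q) u) = None -> mate (st (r0 q).+1 u) = Some k ->
  COL u (q %% t) != q %/ t.
Proof.
rewrite mateA => ->; case E: (enum_fset (Pr q u)) => [//|k' s] _.
have [w [euw wk mw pw cw]] := PrP (enum_head E).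
by rewrite -cw eq_sym; apply: COL_proper.
Qed.

Lemma phase_inv q : Inv (r0 q) -> Inv (r0 q).+2.
Proof.
move=> I u k; rewrite mateB.
case E1: (mate (st (r0 q).+1 u)) => [k1|].
  move=> [<-]; case E0: (mate (st (r0 q) u)) => [k0|].
    have E' := mate_late E0; rewrite E1 in E'; case: E' => ->.
    have [w [euw wk mw]] := I _ _ E0; exists w; split=> //.
    by apply: (mate_mono _ mw); lia.
  move: E1; rewrite mateA E0; case E: (enum_fset (Pr q u)) => [//|k' s] [<-].
  have [w [euw wk mw pw cw]] := PrP (enum_head E).
  exists w; split=> //.
  have mw1 : mate (st (r0 q).+1 w) = None.
    case E2: (mate (st (r0 q).+1 w)) => [z|] //.
    by move: (noA mw E2); rewrite cw eqxx.
  rewrite mateB mw1 cw eqxx pw nbG_nbr ?(esym w u) //.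
  have : mate (st (r0 q).+1 u) = Some (idf w).
    by rewrite mateA E0 E wk.
  by move=> ->; rewrite eqxx.
case: ifP => // /eqP cu; case E2: (PJ u (q %% t)) => [p|] //.
case E3: (nbG e idf (st (r0 q).+1) u p) => [sp|] //.
case: ifP => // /eqP ms [<-].
have [w [euw wp Esp]] := nbG_some E3; rewrite Esp in ms.
by exists w; split=> //; apply: mate_late.
Qed.

Lemma phase_cov q u w : PJ u (q %% t) = Some (idf w) -> COL u (q %% t) = q %/ t ->
  mate (st (r0 q).+2 u) != None \/ mate (st (r0 q).+2 w) != None.
Proof.
move=> p c.
case Eu: (mate (st (r0 q) u)) => [ku|].
  by left; rewrite (mate_mono (k:=ku) (r := r0 q)) //; lia.
case Ew: (mate (st (r0 q) w)) => [kw|].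
  by right; rewrite (mate_mono (k:=kw) (r := r0 q)) //; lia.
right.
have euw : e u w by case/andP: (PJ_isPar p).
have ewu : e w u by rewrite esym.
have H := PrI ewu Eu p c.
move: (erefl (mate (st (r0 q).+1 w))); rewrite {2}mateA Ew.
case E: (enum_fset (Pr q w)) => [|k s].
  by move: H; rewrite -[idf u \in _]/(idf u \in enum_fset _) E.
move=> E1; by rewrite (mate_late E1).
Qed.

Lemma r0S q : r0 q.+1 = (r0 q).+2.
Proof. by rewrite /r0 doubleS !addnS. Qed.

Lemma inv_all q : Inv (r0 q).
Proof.
elim: q => [|q IH]; last by rewrite r0S; apply: phase_inv.
have E : forall r u, r <= l + 3 -> mate (st r u) = None.
  elim=> [//|r IHr] u r3; rewrite mate_early //; exact: IHr (ltnW r3).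
by move=> u k; rewrite E // /r0 double0 addn0.
Qed.

Lemma cov_all q u w j : PJ u j = Some (idf w) -> COL u j * t + j < q ->
  mate (st (r0 q) u) != None \/ mate (st (r0 q) w) != None.
Proof.
move=> p; have [jt _] := PJ_par p.
elim: q => [//|q IH]; rewrite ltnS leq_eqVlt => /orP[/eqP Eq|lt].
  have Hj : q %% t = j by rewrite -Eq modnMDl modn_small.
  have Hc : q %/ t = COL u j by rewrite -Eq divnMDl ?divn_small ?addn0 //; lia.
  by rewrite r0S; apply: phase_cov; rewrite Hj // Hc.
have mono x : mate (st (r0 q) x) != None -> mate (st (r0 q.+1) x) != None.
  case E: (mate _) => [k|] // _; by rewrite (mate_mono (k:=k) (r:=r0 q)) // /r0; lia.
by case: (IH lt) => H; [left|right]; apply: mono.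
Qed.

Definition out u := mate (st (r0 (t * (2 * B2))) u).

Lemma covered u w : e u w -> out u != None \/ out w != None.
Proof.
move=> euw; wlog pw : u w euw / isPar u w.
  move=> H; case: (orient euw) => p; first exact: H.
  by case: (H w u) => //; [rewrite esym|right|left].
have [j jt p] := par_PJ pw.
apply: (cov_all p).
have := bnd3 u j; rewrite -/(COL u j) => cb.
apply: (@leq_trans ((COL u j).+1 * t)); first by rewrite mulSn; lia.
by rewrite mulnC leq_mul2l cb orbT.
Qed.

Lemma solves : solves_maximal_matching e idf out.
Proof.
have I := inv_all (q := t * (2 * B2)).
split; first by move=> v x /I [w [euw wx mw]]; exists w.
split; first split.
- apply/subsetP => f; rewrite !inE => /existsP [u] /existsP [w] /and4P [euw _ _ fE].
  by apply/existsP; exists u; apply/existsP; exists w; rewrite euw.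
- move=> f g; rewrite !inE => /existsP [u] /existsP [w] /and4P [euw mu mw /eqP ->].
  move=> /existsP [u'] /existsP [w'] /and4P [euw' mu' mw' /eqP ->] neq.
  apply/pred0P => x /=; apply/negbTE/negP => /andP[].
  rewrite !inE => /orP[] /eqP -> /orP[] /eqP E.
  + rewrite -E in mu' mw'; move: mu'; rewrite (eqP mu) => /eqP [/inj wE].
    by move: neq; rewrite -E wE eqxx.
  + rewrite -E in mu' mw'; move: mw'; rewrite (eqP mu) => /eqP [/inj wE].
    by move: neq; rewrite -E wE setUC eqxx.
  + rewrite -E in mu' mw'; move: mu'; rewrite (eqP mw) => /eqP [/inj wE].
    by move: neq; rewrite -E wE setUC eqxx.
  + rewrite -E in mu' mw'; move: mw'; rewrite (eqP mw) => /eqP [/inj wE].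
    by move: neq; rewrite -E wE eqxx.
move=> f; rewrite inE => /existsP [u] /existsP [w] /andP[euw /eqP ->].
have cov (a b : 'I_n) : out a != None -> exists2 g, g \in output_matching e idf out & a \in g.
  case E: (out a) => [k|] // _.
  have [b' [eab kb mb]] := I _ _ E.
  exists [set a; b']; last by rewrite !inE eqxx.
  rewrite inE; apply/existsP; exists a; apply/existsP; exists b'.
  by rewrite eab -/(out a) E kb eqxx /out mb !eqxx.
case: (covered euw) => /(cov _ w) [g gM xg]; exists g => //;
  apply/negP => /pred0P /(_ _) H.
  by have := H u; rewrite /= !inE eqxx xg.
by have := H w; rewrite /= !inE eqxx orbT xg.
Qed.
End Main.


Lemma viewE n (e : rel 'I_n) (idf : 'I_n -> nat) T v a b :
  ((a, b) \in [fset (idf p.1, idf p.2) | p in [seq p <- [seq (x, y) | x <- enum (ball e T v),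
        y <- enum (ball e T v)] | e p.1 p.2]]%fset) <->
  exists x y, [/\ x \in ball e T v, y \in ball e T v, e x y, idf x = a & idf y = b].
Proof.
split.
  case/imfsetP => p; rewrite mem_filter => /andP[ep /allpairsP [[x y] [xB yB E]]] [-> ->].
  rewrite E /= in ep *; rewrite /= mem_enum in xB; rewrite /= mem_enum in yB.
  by exists x, y.
case=> x [y [xB yB exy <- <-]]; apply/imfsetP; exists (x, y); last by [].
rewrite mem_filter exy; apply/allpairsP; exists (x, y); rewrite /= !mem_enum.
by split.
Qed.

Theorem mainTheorem4 :
  forall c : nat, 1 <= c ->
  exists (A : nat -> view -> option nat) (T : nat -> nat) (K N0 : nat),
    (forall n, N0 <= n ->
       T n * trunc_log 2 (trunc_log 2 n) <= K * trunc_log 2 n) /\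
    (forall (n : nat) (e : rel 'I_n) (idf : 'I_n -> nat),
       is_tree e -> valid_ids n c idf ->
       solves_maximal_matching e idf (local_output e idf n (T n) A)).
Proof.
move=> c c1.
have [K [N0 HB]] := bound c1.
pose A n (vw : view) := let: (i, _, EH) := vw in
  mate (run init (F (tn n) (ln n) (fn c n)) id (nbrH EH) (Rn c n) i).
exists A, (Rn c), K, N0; split; first exact: HB.
move=> n e idf [[esym eirr] [_ acyc]] [inj hid].
have nL : n < 2 ^ (Ln n).+1 by apply: trunc_log_ltn.
have hh2 : 2 <= hn n by rewrite /hn leq_maxl.
have th : (tn n).+1 = 2 ^ hn n by rewrite /tn; have := expn_gt0 2 (hn n); lia.
have nl : n < 2 ^ ((hn n - 1) * ln n).
  apply: leq_trans nL _; rewrite leq_exp2l // /ln addn1 mulnC.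
  by apply: ltnW; apply: ltn_ceil; lia.
have hid' : forall u, idf u < 2 ^ B1n c n.
  move=> u; have /andP[_ H] := hid u; apply: leq_ltn_trans H _.
  by rewrite /B1n mulnC expnM ltn_exp2r.
have B12 : 2 * B1n c n <= 2 ^ B2n c n by apply: ltnW; apply: trunc_log_ltn.
have B1p : 0 < B1n c n by rewrite /B1n muln_gt0 c1.
have Hs := solves esym eirr acyc inj th hh2 nl hid' (leq_addr _ _) (leq_addl _ _) B12 B1p.
suff -> : local_output e idf n (Rn c n) A = out e idf (tn n) (ln n) (fn c n) (B2n c n) by [].
apply: functional_extensionality => v.
rewrite /local_output /view_of /A /out /r0.
have L := locality init (F (tn n) (ln n) (fn c n)) inj (viewE e idf (Rn c n) v) (leqnn (Rn c n)) (u := v).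
rewrite subnn /= inE eqxx in L.
by rewrite -(L isT).
Qed.
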